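(* Let $\theta=(k_r)$ be a lacunary sequence, $m\ge0$ an integer, $0<\beta\le1$ and $0<p<\infty$. If $\liminf_r q_r>1$, then $w_p^\beta(F,\Delta^m)\subseteq N_\theta^\beta(p,F,\Delta^m)$.
   Context: A fuzzy number is a map $X:\mathbb{R}\to[0,1]$ which is normal, fuzzy convex, upper semicontinuous, with compact closure of $\{t:X(t)>0\}$; $L(\mathbb{R})$ is the set of fuzzy numbers. Level sets $[X]^\alpha=\{t:X(t)\ge\alpha\}$ ($\alpha\in(0,1]$), $[X]^0=\overline{\{t:X(t)>0\}}$, are compact intervals $[u^\alpha,v^\alpha]$. Subtraction: $[X-Y]^\alpha=[u_1^\alpha-v_2^\alpha,v_1^\alpha-u_2^\alpha]$. Metric: $d(X,Y)=\sup_{\alpha\in[0,1]}\max\{|u_1^\alpha-u_2^\alpha|,|v_1^\alpha-v_2^\alpha|\}$. $(\Delta^0X)_k=X_k$, $(\Delta^1X)_k=X_k-X_{k+1}$, $(\Delta^mX)_k=(\Delta^1(\Delta^{m-1}X))_k$. A lacunary sequence is an increasing integer sequence $\theta=(k_r)_{r\ge0}$ with $k_0=0$, $h_r=k_r-k_{r-1}\to\infty$; $I_r=(k_{r-1},k_r]$, $q_r=k_r/k_{r-1}$. $N_\theta^\beta(p,F,\Delta^m)$: sequences $X$ of fuzzy numbers with some $X_0\in L(\mathbb{R})$ such that $\lim_r\frac{1}{h_r^\beta}\sum_{k\in I_r}d(\Delta^mX_k,X_0)^p=0$. $w_p^\beta(F,\Delta^m)$: sequences $X$ with some $X_0\in L(\mathbb{R})$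 such that $\lim_{n\to\infty}\frac{1}{n^\beta}\sum_{k=1}^n d(\Delta^mX_k,X_0)^p=0$. *)

(* Defs.v *)
From HB Require Import structures.
From mathcomp Require Import all_boot all_order all_algebra.
From mathcomp Require Import all_classical all_reals all_analysis.
Set Implicit Arguments. Unset Strict Implicit. Unset Printing Implicit Defensive.
Import Order.TTheory GRing.Theory Num.Theory.
Import numFieldNormedType.Exports.
Local Open Scope classical_set_scope.
Local Open Scope ring_scope.

Section Fuzzy.
Variable R : realType.

Definition fuzzy := R -> R.

Definition is_fuzzy (X : fuzzy) : Prop :=
  [/\ (forall t, 0 <= X t <= 1),
      (exists t, X t = 1),
      (forall s t l, 0 <= l <= 1 -> Num.min (X s) (X t) <= X (l * s + (1 - l) * t)),
      (forall t e, 0 < e -> \forall s \near t, X s < X t + e) &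
      compact (closure [set t | 0 < X t])].

Definition level (X : fuzzy) (a : R) : set R :=
  if 0 < a then [set t | a <= X t] else closure [set t | 0 < X t].

Definition lo (X : fuzzy) (a : R) : R := inf (level X a).
Definition hi (X : fuzzy) (a : R) : R := sup (level X a).

(* X - Y: the fuzzy number whose a-level sets are
   [u1^a - v2^a, v1^a - u2^a]; its membership function is recovered from
   the level sets by (X - Y)(t) = sup {a in [0,1] | t in [X - Y]^a}. *)
Definition fsub (X Y : fuzzy) : fuzzy := fun t =>
  sup [set a | a = 0 \/ (0 < a <= 1 /\ lo X a - hi Y a <= t <= hi X a - lo Y a)].

Definition fdist (X Y : fuzzy) : R :=
  sup [set e | exists a, 0 <= a <= 1 /\
        e = Num.max `|lo X a - lo Y a| `|hi X a - hi Y a|].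

Fixpoint fdelta (m : nat) (X : nat -> fuzzy) (k : nat) : fuzzy :=
  match m with
  | 0 => X k
  | m'.+1 => fsub (fdelta m' X k) (fdelta m' X k.+1)
  end.

Definition hr (th : nat -> nat) (r : nat) : nat := (th r - th r.-1)%N.

Definition lacunary (th : nat -> nat) : Prop :=
  [/\ th 0 = 0%N, (forall r, (th r < th r.+1)%N) &
      (forall M : nat, exists N : nat, forall r, (N <= r)%N -> (M <= hr th r)%N)].

Definition qr (th : nat -> nat) (r : nat) : R := (th r)%:R / (th r.-1)%:R.

Definition N_theta (th : nat -> nat) (p b : R) (m : nat) : set (nat -> fuzzy) :=
  [set X | (forall k, is_fuzzy (X k)) /\
     exists X0, is_fuzzy X0 /\
       (fun r => (\sum_((th r.-1).+1 <= k < (th r).+1)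
                    powR (fdist (fdelta m X k) X0) p) / powR (hr th r)%:R b)
         @ \oo --> (0 : R)].

Definition w_space (p b : R) (m : nat) : set (nat -> fuzzy) :=
  [set X | (forall k, is_fuzzy (X k)) /\
     exists X0, is_fuzzy X0 /\
       (fun n : nat => (\sum_(1 <= k < n.+1) powR (fdist (fdelta m X k) X0) p)
                         / powR n%:R b)
         @ \oo --> (0 : R)].

End Fuzzy.

(* Main.v *)
Require Import Defs.
From HB Require Import structures.
From mathcomp Require Import all_boot all_order all_algebra.
From mathcomp Require Import all_classical all_reals all_analysis.
From mathcomp Require Import lra.
Import Order.TTheory GRing.Theory Num.Theory.
Local Open Scope classical_set_scope.
Local Open Scope ring_scope.
Lemma liminf_ext (R: realType) (u : nat -> R) :
  (1%:E < limn_einf (fun r => (u r)%:E))%E ->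
  exists c : R, 1 < c /\ exists N, forall k, (N<=k)%N -> c <= u k.
Proof.
rewrite limn_einf_lim (cvg_lim _ (@cvg_einfs_sup _ _)) //.
move=> /ereal_sup_gt[_ [N _ <-]].
have lb : forall k, (N <= k)%N -> (einfs (fun r => (u r)%:E) N <= (u k)%:E)%E.
  move=> k Nk; apply: ereal_inf_lbound; exists k => //.
move: lb; case: (einfs _ N) => [r| |] lb.
- rewrite lte_fin => r1; exists ((1 + r) / 2); split.
    by rewrite ltr_pdivlMr // mul1r; lra.
  exists N => k /lb; rewrite lee_fin => rk; lra.
- move=> _; exists 2; split; first lra.
  by exists N => k /lb.
- by [].
Qed.

Lemma th_ge (th : nat -> nat) : th 0 = 0%N -> (forall r, (th r < th r.+1)%N) ->
  forall r, (r <= th r)%N.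
Proof.
move=> h0 hs; elim=> [|r IH]; first by rewrite h0.
by apply: leq_ltn_trans IH (hs r).
Qed.

Theorem theorem2p14 (R : realType) (th : nat -> nat) (m : nat) (b p : R) :
  lacunary th -> 0 < b <= 1 -> 0 < p ->
  (1%:E < limn_einf (fun r => (qr R th r)%:E))%E ->
  w_space p b m `<=` N_theta th p b m.
Proof.
move=> [h0 hs _] /andP[b0 b1] p0 /liminf_ext [c [c1 [N HN]]].
move=> X [fX [X0 [fX0 HX]]]; split => //; exists X0; split => //.
set a := fun k => powR (fdist (fdelta m X k) X0) p.
set f := fun n : nat => (\sum_(1 <= k < n.+1) a k) / powR n%:R b.
have {}HX : f @ \oo --> 0 by [].
have thge := @th_ge th h0 hs.
have Hth : (th @ \oo --> \oo)%classic.
  move=> P [n _ HP]; exists n => // r /= nr; apply: HP.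
  exact: leq_trans nr (thge r).
have Hf : (fun r => f (th r)) @ \oo --> 0 by apply: cvg_comp Hth HX.
set e := 1 - c^-1.
have c0 : 0 < c by lra.
have e0 : 0 < e by rewrite /e subr_gt0 invf_lt1.
set K := (powR e b)^-1.
have Pe0 : 0 < powR e b by apply: powR_gt0.
apply: (@squeeze_cvgr _ _ _ _ (fun _ => 0) (fun r => K * f (th r))).
- exists (maxn N 2) => // r /= Hr.
  have rN : (N <= r)%N by move: Hr; rewrite geq_max => /andP[].
  have r2 : (2 <= r)%N by move: Hr; rewrite geq_max => /andP[].
  have a0 : forall k, 0 <= a k by move=> k; apply: powR_ge0.
  have ypos : (0 < th r.-1)%N.
    apply: leq_trans (thge r.-1); by case: r r2 {Hr rN} => [|[|r]].
  have hlt : (th r.-1 < th r)%N.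
    by clear -hs r2; case: r r2 => [|r] // _; apply: hs.
  apply/andP; split.
    by apply: divr_ge0; [apply: sumr_ge0 => k _; apply: a0 | apply: powR_ge0].
  set SI := \sum_(_ <= k < _) a k.
  set S := \sum_(1 <= k < (th r).+1) a k.
  have SIS : SI <= S.
    rewrite /S (big_cat_nat _ (n := (th r.-1).+1)) //=; last by rewrite ltnS ltnW.
    by rewrite lerDr; apply: sumr_ge0 => k _; apply: a0.
  have S0 : 0 <= S by apply: sumr_ge0 => k _; apply: a0.
  set x := (th r)%:R : R.
  set y := (th r.-1)%:R : R.
  have y0 : 0 < y by rewrite ltr0n.
  have cq : c <= x / y by exact: HN.
  have cy : c * y <= x by rewrite -ler_pdivlMr.
  have hx : e * x <= (hr th r)%:R.
    have -> : (hr th r)%:R = x - y by rewrite /hr natrB // ltnW.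
    have yc : y <= x / c by rewrite ler_pdivlMr // mulrC.
    rewrite /e mulrBl mul1r (mulrC _ x).
    by rewrite lerD2l lerN2.
  have x0 : 0 < x by rewrite ltr0n; apply: leq_trans ypos (ltnW hlt).
  have Ph : powR e b * powR x b <= powR (hr th r)%:R b.
    rewrite -powRM; [|exact: ltW e0|exact: ltW x0]. apply: (ge0_ler_powR (ltW b0)) => //.
      by rewrite nnegrE mulr_ge0 ?ltW.
    by rewrite nnegrE.
  have Px : 0 < powR x b by apply: powR_gt0.
  apply: (@le_trans _ _ (S / powR (hr th r)%:R b)).
    by apply: ler_wpM2r => //; rewrite invr_ge0 powR_ge0.
  apply: (@le_trans _ _ (S / (powR e b * powR x b))).
    apply: ler_wpM2l => //; rewrite lef_pV2 ?posrE ?mulr_gt0 //.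
    exact: lt_le_trans (mulr_gt0 Pe0 Px) Ph.
  by rewrite /K /f -/S invfM mulrCA.
- apply/cvgr0Pnorm_lt => eps eps0; exists 0%N => // t _ /=; by rewrite normr0.
- have := cvgMl_tmp (a:=K) Hf; rewrite mulr0; exact.
Qed.
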